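(* Let $\mathcal{C}\subseteq[q]^{\tilde{n}}$ be an $(\tilde{n},k,\tilde{d})_q$ error-correcting code and $u>0$ an integer. Let $M$ be the $m\times n$ Boolean matrix, $n=q^k$, $m=\tilde{n}q^u$, constructed as follows: let $\varphi\colon[q]\to\{0,1\}^{q^u}$ map $x$ to the vector indexed by $u$-tuples $(a_1,\dots,a_u)\in[q]^u$ having a 1 at $(a_1,\dots,a_u)$ iff $a_i=x$ for some $i\in[u]$; arrange all codewords of $\mathcal{C}$ as the columns of an $\tilde{n}\times q^k$ matrix $M'$ over $[q]$ and replace each entry $x$ of $M'$ by the column $\varphi(x)$. Then $M$ is strongly $(d,e;u)$-disjunct for every $d<(\tilde{n}-e)/((\tilde{n}-\tilde{d})u)$.
   Context: An $(\tilde{n},k,\tilde{d})_q$ code is a set of $q^k$ words of length $\tilde{n}$ over an alphabet of size $q$ with minimum pairwise Hamming distance $\tilde{d}$. For a Boolean column vector $C$, $\mathrm{supp}(C)$ is the set of positions where it is 1. A Boolean matrix (with at least $d+u$ columns) is strongly $(d,e;u)$-disjunct if for every choice of $d+u$ distinct columns $C_1,\dots,C_u,C'_1,\dots,C'_d$ we have $\big|\bigcap_{i=1}^u\mathrm{supp}(C_i)\setminus\bigcup_{i=1}^d\mathrm{supp}(C'_i)\big|>e$. *)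

(* Defs.v *)
From mathcomp Require Import all_boot all_order all_algebra.
Set Implicit Arguments. Unset Strict Implicit. Unset Printing Implicit Defensive.

Definition word (nt q : nat) := {ffun 'I_nt -> 'I_q}.

Definition hamming (nt q : nat) (x y : word nt q) : nat :=
  #|[set i : 'I_nt | x i != y i]|.

(* A code with q^k words of length nt over [q] and minimum distance dt,
   given as an injective enumeration of its codewords (the columns order). *)
Definition is_code (nt k dt q : nat) (cw : 'I_(q ^ k) -> word nt q) : Prop :=
  injective cw /\ (forall j j' : 'I_(q ^ k), j != j' -> dt <= hamming (cw j) (cw j')).

Definition supp (R J : finType) (M : R -> J -> bool) (c : J) : {set R} :=
  [set r | M r c].

(* Strongly (d,e;u)-disjunct: for every choice of d+u distinct columns
   C_1..C_u (f (lshift d i)) and C'_1..C'_d (f (rshift u j)),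
   |cap_i supp C_i \ cup_j supp C'_j| > e. *)
Definition strongly_disjunct (R J : finType) (M : R -> J -> bool)
    (d e u : nat) : Prop :=
  forall f : 'I_(u + d) -> J, injective f ->
    e < #|(\bigcap_(i < u) supp M (f (lshift d i)))
           :\: (\bigcup_(j < d) supp M (f (rshift u j)))|.

Definition phi (q u : nat) (x : 'I_q) (a : {ffun 'I_u -> 'I_q}) : bool :=
  [exists i : 'I_u, a i == x].

(* The concatenated matrix: m = nt * q^u rows indexed by (coordinate, u-tuple),
   n = q^k columns indexed by the codewords. *)
Definition concat_matrix (nt k q u : nat) (cw : 'I_(q ^ k) -> word nt q)
    (r : 'I_nt * {ffun 'I_u -> 'I_q}) (j : 'I_(q ^ k)) : bool :=
  phi (cw j r.1) r.2.

(* Main.v *)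
Require Import Defs.
From mathcomp Require Import all_boot all_order all_algebra.
From mathcomp Require Import zify ring lra.
Import GRing.Theory Num.Theory.

Lemma card_bigcup_le (T : finType) (n : nat) (A : 'I_n -> {set T}) :
  (#|\bigcup_(i < n) A i| <= \sum_(i < n) #|A i|)%N.
Proof.
apply: (big_rec2 (fun (X : {set T}) (s : nat) => #|X| <= s)%N) => //.
  by rewrite cards0.
move=> i X s _ H.
by rewrite cardsU; apply: leq_trans (leq_subr _ _) _; rewrite leq_add2l.
Qed.

Lemma agree_card (nt q : nat) (x y : word nt q) :
  (#|[set i | x i == y i]| + hamming x y)%N = nt.
Proof.
rewrite /hamming -[RHS](card_ord nt) -(cardsC [set i | x i == y i]).
congr (_ + _)%N; apply: eq_card => i; by rewrite !inE.
Qed.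

Local Open Scope ring_scope.

Theorem mainTheorem13 (nt k dt q u : nat) (cw : 'I_(q ^ k) -> word nt q)
  (Hcode : is_code dt cw) (Hu : (0 < u)%N) (d e : nat)
  (Hd : d%:Q < (nt%:Q - e%:Q) / ((nt%:Q - dt%:Q) * u%:Q))
  (Hden : dt%:Q < nt%:Q) :
  strongly_disjunct (@concat_matrix nt k q u cw) d e u.
Proof.
have Hdt : (dt < nt)%N by rewrite -(ltr_nat rat) .
have Hnum : (d * ((nt - dt) * u) + e < nt)%N.
  rewrite -(ltr_nat rat) natrD !natrM (natrB _ (ltnW Hdt)).
  have Hpos : 0 < (nt%:Q - dt%:Q) * u%:Q.
    by apply: mulr_gt0; [rewrite subr_gt0 | rewrite ltr0n].
  rewrite ltr_pdivlMr // in Hd.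
  by rewrite -ltrBrDr.
case: Hcode => Hinj Hdist.
move=> f finj.
pose g (i : 'I_nt) : 'I_nt * {ffun 'I_u -> 'I_q} :=
  (i, [ffun l => cw (f (lshift d l)) i]).
have ginj : injective g by move=> i j [].
pose G := [set i : 'I_nt | [forall j : 'I_d, forall l : 'I_u,
   cw (f (rshift u j)) i != cw (f (lshift d l)) i]].
have HG : g @: G \subset (\bigcap_(i < u) supp (concat_matrix cw) (f (lshift d i)))
           :\: (\bigcup_(j < d) supp (concat_matrix cw) (f (rshift u j))).
  apply/subsetP => r /imsetP [i]; rewrite inE => /forallP HiG ->.
  rewrite inE; apply/andP; split.
    apply/bigcupP => [[j _]]; rewrite inE /concat_matrix /phi /=.
    move=> /existsP [l]; rewrite ffunE => /eqP Heq.
    by move: (HiG j) => /forallP /(_ l); rewrite Heq eqxx.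
  apply/bigcapP => l _; rewrite inE /concat_matrix /phi /=.
  by apply/existsP; exists l; rewrite ffunE.
apply: leq_trans (subset_leq_card HG); rewrite card_imset //.
pose A (j : 'I_d) (l : 'I_u) :=
  [set i | cw (f (rshift u j)) i == cw (f (lshift d l)) i].
have HC : ~: G \subset \bigcup_(j < d) \bigcup_(l < u) A j l.
  apply/subsetP => i; rewrite !inE => /forallPn [j] /forallPn [l].
  rewrite negbK => Heq; apply/bigcupP; exists j => //.
  by apply/bigcupP; exists l => //; rewrite inE.
have HA : forall j l, (#|A j l| <= nt - dt)%N.
  move=> j l.
  have Hne : f (rshift u j) != f (lshift d l).
    apply/eqP => /finj /(congr1 val) /=; have := ltn_ord l; lia.
  have := Hdist _ _ Hne; have := @agree_card _ _ (cw (f (rshift u j))) (cw (f (lshift d l))).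
  rewrite /A; lia.
have Hbad : (#|~: G| <= d * ((nt - dt) * u))%N.
  apply: leq_trans (subset_leq_card HC) _.
  refine (leq_trans (card_bigcup_le _ _ (fun j : 'I_d => \bigcup_(l < u) A j l)) _).
  have HB : forall j : 'I_d, (#|\bigcup_(l < u) A j l| <= (nt - dt) * u)%N.
    move=> j; refine (leq_trans (card_bigcup_le _ _ (A j)) _).
    refine (leq_trans (leq_sum _ (fun l (_ : true) => HA j l)) _).
    by rewrite sum_nat_const card_ord mulnC.
  refine (leq_trans (leq_sum _ (fun j (_ : true) => HB j)) _).
  by rewrite sum_nat_const card_ord.
have := cardsC G; rewrite card_ord; lia.
Qed.
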